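(* Let $P\in\mathbb{R}^N$ and $a\in\mathbb{R}$. If the equation $H(x,Du+P)=a$ in $\mathbb{R}^N$ admits a bounded $\mathbb{Z}^N$-periodic upper semicontinuous viscosity subsolution and a bounded $\mathbb{Z}^N$-periodic lower semicontinuous viscosity supersolution, then $a=\overline H(P)$.
   Context: $V:\mathbb{R}^N\to\mathbb{R}^N$ is $\mathbb{Z}^N$-periodic and Lipschitz continuous; $H(x,p)=|p|+p\cdot V(x)$. $\overline H(P)=\inf\{a\in\mathbb{R}\mid H(x,Du+P)=a$ admits an upper semicontinuous, bounded, $\mathbb{Z}^N$-periodic viscosity subsolution on $\mathbb{R}^N\}$. *)

(* Defs.v *)
From HB Require Import structures.
From mathcomp Require Import all_boot all_order all_algebra.
From mathcomp Require Import all_classical all_reals all_analysis.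
Set Implicit Arguments. Unset Strict Implicit. Unset Printing Implicit Defensive.
Import Order.TTheory GRing.Theory Num.Theory.
Import numFieldNormedType.Exports.
Local Open Scope classical_set_scope.
Local Open Scope ring_scope.

Section Defs.
Variables (R : realType) (N : nat).
Notation vec := 'rV[R]_N.

Definition dotp (p q : vec) : R := \sum_(i < N) p 0 i * q 0 i.
Definition enorm (p : vec) : R := Num.sqrt (dotp p p).

Definition Ham (V : vec -> vec) (x p : vec) : R := enorm p + dotp p (V x).

Definition intvec (z : 'rV[int]_N) : vec := map_mx (fun t : int => t%:~R) z.

Definition Zperiodic {T : Type} (f : vec -> T) : Prop :=
  forall (x : vec) (z : 'rV[int]_N), f (x + intvec z) = f x.

Definition lipschitz_vf (V : vec -> vec) : Prop :=
  exists L : R, forall x y : vec, enorm (V x - V y) <= L * enorm (x - y).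

Definition bdd_fun (u : vec -> R) : Prop :=
  exists M : R, forall x, `|u x| <= M.

Definition usc (u : vec -> R) : Prop :=
  forall (x : vec) (c : R), u x < c -> \forall y \near x, u y < c.
Definition lsc (u : vec -> R) : Prop :=
  forall (x : vec) (c : R), c < u x -> \forall y \near x, c < u y.

Definition grad (phi : vec -> R) (x : vec) : vec :=
  \row_(i < N) ('d phi x (delta_mx 0 i : vec)).

Definition C1 (phi : vec -> R) : Prop :=
  (forall x, differentiable phi x) /\
  (forall i : 'I_N, continuous (fun x => 'd phi x (delta_mx 0 i : vec))).

Definition visc_sub (V : vec -> vec) (P : vec) (a : R) (u : vec -> R) : Prop :=
  usc u /\
  forall (phi : vec -> R) (x0 : vec), C1 phi ->
    (\forall y \near x0, u y - phi y <= u x0 - phi x0) ->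
    Ham V x0 (grad phi x0 + P) <= a.

Definition visc_super (V : vec -> vec) (P : vec) (a : R) (u : vec -> R) : Prop :=
  lsc u /\
  forall (phi : vec -> R) (x0 : vec), C1 phi ->
    (\forall y \near x0, u x0 - phi x0 <= u y - phi y) ->
    a <= Ham V x0 (grad phi x0 + P).

Definition Hbar (V : vec -> vec) (P : vec) : \bar R :=
  ereal_inf [set a%:E | a in [set a : R |
     exists u : vec -> R, visc_sub V P a u /\ bdd_fun u /\ Zperiodic u]].

End Defs.

(* Main.v *)
Require Import Defs.
From HB Require Import structures.
From mathcomp Require Import all_boot all_order all_algebra.
From mathcomp Require Import all_classical all_reals all_analysis.
From mathcomp Require Import ring lra.
Import Order.TTheory GRing.Theory Num.Theory.
Import numFieldNormedType.Exports.
Local Open Scope classical_set_scope.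
Local Open Scope ring_scope.

Lemma usc_max (T : topologicalType) (R : realType) (K : set T) (f : T -> R) (s : R) :
  compact K ->
  (forall x, K x -> forall c, f x < c -> \forall y \near x, f y < c) ->
  (forall e, 0 < e -> exists x, K x /\ s - e < f x) ->
  exists x, K x /\ s <= f x.
Proof.
move=> cK usc appr.
pose B := fun e : R => K `&` [set x | s - e < f x].
have FF : Filter (filter_from [set e : R | 0 < e] B).
  apply: filter_from_filter; first by exists 1%R; rewrite /= ltr01.
  move=> i j /= i0 j0; exists (Num.min i j); first by rewrite /= lt_min i0 j0.
  move=> x [Kx /= hx]; split; split => //=; apply: le_lt_trans hx;
    by rewrite lerD2l lerN2 ge_min lexx ?orbT.
have PF : ProperFilter (filter_from [set e : R | 0 < e] B).
  apply: (@filter_from_proper _ _ _ B FF).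
  move=> e /= e0.
  by have [x [Kx hx]] := appr e e0; exists x.
have FK : filter_from [set e : R | 0 < e] B K by exists 1%R; [rewrite /= ltr01|move=> x []].
have [z [Kz clz]] := cK _ PF FK.
exists z; split => //.
rewrite leNgt; apply/negP => fzs.
pose c := (f z + s) / 2.
have hc : f z < c by rewrite /c; lra.
have := usc z Kz c hc; move=> Bn.
have e0 : 0 < (s - f z) / 2 by lra.
have [y [[_ /= hy1] hy2]] := clz (B ((s - f z) / 2)) _ (ex_intro2 _ _ ((s - f z) / 2) e0 (@subset_refl _ _)) Bn.
have : c < f y.
  rewrite /c; lra.
by rewrite ltNge (ltW hy2).
Qed.
Lemma coord_derive {R : realType} {N : nat} (j : 'I_N) (x v : 'rV[R]_N) :
  is_derive x v (fun y : 'rV[R]_N => y 0 j) (v 0 j).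
Proof.
have @f : {linear 'rV[R]_N -> R}.
  by exists (fun M : 'rV[R]_N => M 0 j); do 2![eexists]; do ?[constructor];
     rewrite ?mxE// => ? *; rewrite ?mxE//; move=> ?; rewrite !mxE.
have -> : (fun y : 'rV[R]_N => y 0 j) = f by [].
have df : differentiable f x by exact/linear_differentiable/coord_continuous.
apply: DeriveDef; first exact: diff_derivable.
by rewrite deriveE // diff_lin //; apply: coord_continuous.
Qed.

Lemma sq_derive {R : realType} {N : nat} (z x v : 'rV[R]_N) :
  is_derive x v (fun y => dotp (y - z) (y - z)) (2 * dotp (x - z) v).
Proof.
have -> : (fun y => dotp (y - z) (y - z)) =
   \sum_(j < N) (fun y : 'rV[R]_N => (y 0 j - z 0 j) * (y 0 j - z 0 j)).
  by apply/funext => y; rewrite fct_sumE /dotp; apply: eq_bigr => j _; rewrite !mxE.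
have -> : 2 * dotp (x - z) v = \sum_(j < N) ((x 0 j - z 0 j) *: v 0 j + (x 0 j - z 0 j) *: v 0 j).
  rewrite /dotp mulr_sumr; apply: eq_bigr => j _; rewrite !mxE; rewrite /GRing.scale /=; ring.
apply: is_derive_sum => j.
have hd : is_derive x v (fun y : 'rV[R]_N => y 0 j - z 0 j) (v 0 j).
  have := is_deriveB (coord_derive j x v) (is_derive_cst (z 0 j) x v).
  by rewrite subr0.
exact: (@is_deriveM _ _ _ _ x v _ _ hd hd).
Qed.

Lemma dotp_delta {R : realType} {N : nat} (p : 'rV[R]_N) (i : 'I_N) :
  dotp p (delta_mx 0 i) = p 0 i.
Proof.
rewrite /dotp (bigD1 i) //= big1 => [|j ji]; rewrite !mxE ?eqxx /=.
  by rewrite mulr1 addr0.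
by rewrite (negbTE ji) mulr0.
Qed.

Lemma sq_differentiable {R : realType} {N : nat} (z x : 'rV[R]_N) :
  differentiable (fun y => dotp (y - z) (y - z)) x.
Proof.
have -> : (fun y => dotp (y - z) (y - z)) =
   \sum_(j < N) (fun y : 'rV[R]_N => (y 0 j - z 0 j) * (y 0 j - z 0 j)).
  by apply/funext => y; rewrite fct_sumE /dotp; apply: eq_bigr => j _; rewrite !mxE.
apply: differentiable_sum => j.
have hd : differentiable (fun y : 'rV[R]_N => y 0 j - z 0 j) x.
  apply: (@differentiableB _ _ _ (fun y : 'rV[R]_N => y 0 j) (cst (z 0 j))).
    exact: differentiable_coord.
  exact: differentiable_cst.
exact: (@differentiableM _ _ (fun y : 'rV[R]_N => y 0 j - z 0 j) _ x hd hd).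
Qed.

Lemma test_fn {R : realType} {N : nat} (z : 'rV[R]_N) (k c : R) :
  C1 (fun y => k + c * dotp (y - z) (y - z)) /\
  forall x, grad (fun y => k + c * dotp (y - z) (y - z)) x = (2 * c) *: (x - z).
Proof.
set phi := fun y => _.
have eqphi : phi = cst k + cst c * (fun y => dotp (y - z) (y - z)) by [].
have dphi : forall x, differentiable phi x.
  move=> x; rewrite eqphi; apply: differentiableD; first exact: differentiable_cst.
  apply: differentiableM; first exact: differentiable_cst.
  exact: sq_differentiable.
have hder : forall x v, 'd phi x v = c * (2 * dotp (x - z) v).
  move=> x v; rewrite -deriveE //.
  have := is_deriveD (is_derive_cst k x v)
     (is_deriveM (is_derive_cst c x v) (sq_derive z x v)).
  rewrite -eqphi => hd; rewrite derive_val.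
  by rewrite /GRing.scale /= mulr0 !add0r addr0.
split; first split => //.
  move=> i.
  have -> : (fun x => 'd phi x (delta_mx 0 i : 'rV[R]_N)) =
            (fun x => c * (2 * (x 0 i - z 0 i))).
    by apply/funext => x; rewrite hder dotp_delta !mxE.
  have -> : (fun x : 'rV[R]_N => c * (2 * (x 0 i - z 0 i))) =
     cst c * (cst 2 * ((fun y : 'rV[R]_N => y 0 i) - cst (z 0 i))) by [].
  move=> x; apply: differentiable_continuous.
  apply: differentiableM; first exact: differentiable_cst.
  apply: differentiableM; first exact: differentiable_cst.
  apply: differentiableB; last exact: differentiable_cst.
  exact: differentiable_coord.
move=> x; apply/rowP => i; rewrite /grad !mxE hder dotp_delta !mxE; lra.
Qed.
Section Alg.
Context {R : realType} {N : nat}.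
Implicit Types p q w : 'rV[R]_N.

Lemma dotpC p q : dotp p q = dotp q p.
Proof. by apply: eq_bigr => i _; rewrite mulrC. Qed.

Lemma dotpBr p q w : dotp p (q - w) = dotp p q - dotp p w.
Proof.
rewrite /dotp -sumrB; apply: eq_bigr => i _; rewrite !mxE; ring.
Qed.

Lemma dotpDl p q w : dotp (p + q) w = dotp p w + dotp q w.
Proof.
rewrite /dotp -big_split; apply: eq_bigr => i _; rewrite !mxE; by rewrite mulrDl.
Qed.

Lemma dotpZl (k : R) p q : dotp (k *: p) q = k * dotp p q.
Proof.
rewrite /dotp mulr_sumr; apply: eq_bigr => i _; rewrite !mxE; ring.
Qed.

Lemma dotp_ge0 p : 0 <= dotp p p.
Proof. by apply: sumr_ge0 => i _; rewrite -expr2 sqr_ge0. Qed.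

Lemma dotp_2le p q : 2 * dotp p q <= dotp p p + dotp q q.
Proof.
rewrite /dotp -big_split mulr_sumr; apply: ler_sum => i _.
rewrite -subr_ge0; have -> : p 0 i * p 0 i + q 0 i * q 0 i - 2 * (p 0 i * q 0 i) = (p 0 i - q 0 i) ^+ 2 by ring.
exact: sqr_ge0.
Qed.

Lemma coord_sq_le p i : p 0 i ^+ 2 <= dotp p p.
Proof.
rewrite /dotp (bigD1 i) //= -expr2 lerDl.
by apply: sumr_ge0 => j _; rewrite -expr2 sqr_ge0.
Qed.

Lemma Ham_diff (V : 'rV[R]_N -> 'rV[R]_N) x y q :
  Ham V x q - Ham V y q = dotp q (V x - V y).
Proof. rewrite /Ham dotpBr; ring. Qed.

Lemma lip_sq (V : 'rV[R]_N -> 'rV[R]_N) (L : R) x y :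
  enorm (V x - V y) <= L * enorm (x - y) ->
  dotp (V x - V y) (V x - V y) <= L ^+ 2 * dotp (x - y) (x - y).
Proof.
rewrite /enorm => h.
have h0 := sqrtr_ge0 (dotp (V x - V y) (V x - V y)).
have h1 := sqrtr_ge0 (dotp (x - y) (x - y)).
rewrite -(sqr_sqrtr (dotp_ge0 (V x - V y))) -(sqr_sqrtr (dotp_ge0 (x - y))).
rewrite -exprMn; rewrite ler_sqr ?nnegrE //; exact: le_trans h.
Qed.

End Alg.

Lemma exists_max {R : realType} {N : nat} (u v : 'rV[R]_N -> R) (c : R) :
  0 < c -> usc u -> lsc v -> bdd_fun u -> bdd_fun v -> Zperiodic u -> Zperiodic v ->
  exists x0 y0, forall x y,
    u x - v y - c * dotp (x - y) (x - y) <= u x0 - v y0 - c * dotp (x0 - y0) (x0 - y0).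
Proof.
move=> c0 uusc vlsc [Mu hMu] [Mv hMv] uper vper.
pose Phi := fun p : 'rV[R]_N * 'rV[R]_N => u p.1 - v p.2 - c * dotp (p.1 - p.2) (p.1 - p.2).
pose M := Mu + Mv.
have Mu0 : 0 <= Mu by apply: le_trans (hMu 0).
have Mv0 : 0 <= Mv by apply: le_trans (hMv 0).
have PhiM : forall p, Phi p <= M.
  move=> [x y]; rewrite /Phi /M /=.
  have := hMu x; have := hMv y; rewrite !ler_norml => /andP[h1 h2] /andP[h3 h4].
  have := dotp_ge0 (x - y); nra.
have Phi0 : - M <= Phi (0, 0).
  rewrite /Phi /M /= subrr.
  have -> : dotp (0 : 'rV[R]_N) 0 = 0 by rewrite /dotp big1 // => i _; rewrite mxE mul0r.
  have := hMu 0; have := hMv 0; rewrite !ler_norml => /andP[h1 h2] /andP[h3 h4]; lra.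
pose E := [set Phi p | p in [set: 'rV[R]_N * 'rV[R]_N]].
have hsE : has_sup E.
  split; first by exists (Phi (0,0)), (0,0).
  by exists M => _ [p _ <-]; exact: PhiM.
pose s := sup E.
have sub_s : forall p, Phi p <= s by move=> p; apply: sup_upper_bound => //; exists p.
have s_lb : - M <= s by apply: le_trans Phi0 (sub_s _).
have Phi_per : forall x y (z : 'rV[int]_N), Phi (x + intvec R z, y + intvec R z) = Phi (x, y).
  move=> x y z; rewrite /Phi /= uper vper; congr (_ - _ * _);
  by rewrite opprD addrACA subrr addr0.
pose B := (2 * M + 1) / c + 1.
pose K := [set w : 'rV[R]_N | forall i, `[0, 1]%classic (w ord0 i)] `*`
          [set w : 'rV[R]_N | forall i, `[- B, 1 + B]%classic (w ord0 i)].
have cK : compact K.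
  apply: compact_setX.
    exact: (@rV_compact R N (fun=> `[0, 1]%classic) (fun=> @segment_compact R 0 1)).
  exact: (@rV_compact R N (fun=> `[- B, 1 + B]%classic) (fun=> @segment_compact R _ _)).
have appr : forall e, 0 < e -> exists p, K p /\ s - e < Phi p.
  move=> e e0.
  have e'0 : 0 < Num.min e 1 by rewrite lt_min e0 ltr01.
  have [_ [[x y] _ <-] hp] := sup_adherent e'0 hsE.
  pose z : 'rV[int]_N := \row_i (- Num.floor (x 0 i)).
  exists (x + intvec R z, y + intvec R z); rewrite Phi_per; split; last first.
    by apply: le_lt_trans hp; rewrite lerD2l lerN2 ge_min lexx.
  have hd : c * dotp (x - y) (x - y) <= 2 * M + 1.
    have := hMu x; have := hMv y; rewrite !ler_norml => /andP[h1 h2] /andP[h3 h4].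
    have : s - 1 <= Phi (x, y).
      by apply: le_trans (ltW hp); rewrite lerD2l lerN2 ge_min lexx orbT.
    rewrite /Phi /= => h; move: s_lb; rewrite /M => s_lb; lra.
  have hxi : forall i, 0 <= (x + intvec R z) 0 i <= 1.
    move=> i; rewrite !mxE.
    have hf1 := real_floor_le (num_real (x 0 i)).
    have hf2 := real_floorD1_gt (num_real (x 0 i)).
    rewrite intrD in hf2.
    rewrite mulrNz; apply/andP; split; lra.
  split => i /=; rewrite in_itv /=.
    by have := hxi i.
  have hsq := coord_sq_le (x - y) i.
  have hdd : dotp (x - y) (x - y) <= (2 * M + 1) / c.
    by rewrite ler_pdivlMr // mulrC.
  have hxy : `|(x - y) 0 i| <= B.
    rewrite /B; have := le_trans hsq hdd.
    set X := (2 * M + 1) / c; set t := (x - y) 0 i => ht.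
    have X0 : 0 <= X by apply: le_trans ht; exact: sqr_ge0.
    case: (lerP `|t| 1) => h; first lra.
    have n2 : `|t| ^+ 2 = t ^+ 2 by rewrite real_normK // num_real.
    rewrite -n2 in ht; nra.
  have := hxi i; move: hxy; rewrite !mxE ler_norml => /andP[h1 h2] /andP[h3 h4].
  apply/andP; split; lra.
have sqc_cont : forall w : 'rV[R]_N, {for w, continuous (fun w => c * dotp w w)}.
  move=> w; apply: differentiable_continuous.
  have -> : (fun w : 'rV[R]_N => c * dotp w w) = (fun w => c * dotp (w - 0) (w - 0)).
    by apply/funext => w'; rewrite subr0.
  have -> : (fun w : 'rV[R]_N => c * dotp (w - 0) (w - 0)) = cst c * (fun w => dotp (w - 0) (w - 0)) by [].
  apply: differentiableM; first exact: differentiable_cst.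
  exact: sq_differentiable.
have Phi_usc : forall p, K p -> forall C, Phi p < C -> \forall q \near p, Phi q < C.
  move=> [x y] _ C hC; pose r := C - Phi (x, y).
  have r0 : 0 < r by rewrite /r subr_gt0.
  have hu := uusc x (u x + r / 3) ltac:(lra).
  have hv := vlsc y (v y - r / 3) ltac:(lra).
  have hu' : \forall q \near (x, y), u q.1 < u x + r / 3 := @cvg_fst _ _ _ _ (@nbhs_pfilter _ y) _ hu.
  have hv' : \forall q \near (x, y), v y - r / 3 < v q.2 := @cvg_snd _ _ _ _ (@nbhs_pfilter _ x) _ hv.
  have hg : \forall q \near (x, y),
      c * dotp (x - y) (x - y) - r / 3 < c * dotp (q.1 - q.2) (q.1 - q.2).
    have hc := @continuous_comp _ _ _ (fun q : 'rV[R]_N * 'rV[R]_N => q.1 - q.2)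
       (fun w => c * dotp w w) (x, y) (@sub_continuous _ (x, y)) (sqc_cont _).
    have H := cvgr_gt _ hc (c * dotp (x - y) (x - y) - r / 3).
    have H' : c * dotp (x - y) (x - y) - r / 3 < ((fun w => c * dotp w w) \o (fun q : 'rV[R]_N * 'rV[R]_N => q.1 - q.2)) (x, y).
      rewrite /=; lra.
    have H2 := H (@nbhs_pfilter _ (x, y)) H'; apply: filterS H2 => q /=; lra.
  have H3 := @filterI _ _ (@nbhs_pfilter _ (x, y)) _ _ hu' (@filterI _ _ (@nbhs_pfilter _ (x, y)) _ _ hv' hg).
  apply: filterS H3 => q [h1 [h2 h3]].
  move: h1 h2 h3; rewrite /r /Phi /=; lra.
have [p [Kp sp]] := @usc_max _ R K Phi s cK Phi_usc appr.
exists p.1, p.2 => x y.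
exact: (le_trans (sub_s (x, y)) sp).
Qed.

Lemma dotpNN {R : realType} {N : nat} (p : 'rV[R]_N) : dotp (- p) (- p) = dotp p p.
Proof. by apply: eq_bigr => i _; rewrite !mxE mulrNN. Qed.

Lemma step {R : realType} {N : nat} (V : 'rV[R]_N -> 'rV[R]_N) (P : 'rV[R]_N)
  (a b c : R) (u v : 'rV[R]_N -> R) (x y : 'rV[R]_N) :
  visc_sub V P b u -> visc_super V P a v ->
  (forall x' y', u x' - v y' - c * dotp (x' - y') (x' - y')
                 <= u x - v y - c * dotp (x - y) (x - y)) ->
  a - b <= dotp ((2 * c) *: (x - y) + P) (V y - V x).
Proof.
move=> [_ hsub] [_ hsup] hmax.
have [C1a ga] := test_fn y (v y) c.
have lm : forall x', u x' - (v y + c * dotp (x' - y) (x' - y)) <=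
                     u x - (v y + c * dotp (x - y) (x - y)).
  by move=> x'; have := hmax x' y; lra.
have h1 := hsub _ x C1a (@nearW _ _ _ (@nbhs_pfilter _ x) lm).
rewrite ga in h1.
have [C1b gb] := test_fn x (u x) (- c).
have lm2 : forall y', v y - (u x + - c * dotp (y - x) (y - x)) <=
                      v y' - (u x + - c * dotp (y' - x) (y' - x)).
  move=> y'; have := hmax x y'.
  rewrite -(dotpNN (x - y')) -(dotpNN (x - y)) !opprB; lra.
have h2 := hsup _ y C1b (@nearW _ _ _ (@nbhs_pfilter _ y) lm2).
rewrite gb in h2.
have e : (2 * - c) *: (y - x) = (2 * c) *: (x - y).
  by rewrite mulrN scaleNr -scalerN opprB.
rewrite e in h2.
rewrite -Ham_diff; lra.
Qed.

Lemma comparison {R : realType} {N : nat} (V : 'rV[R]_N -> 'rV[R]_N) (P : 'rV[R]_N)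
  (a b : R) (u v : 'rV[R]_N -> R) :
  lipschitz_vf V -> visc_sub V P b u -> bdd_fun u -> Zperiodic u ->
  visc_super V P a v -> bdd_fun v -> Zperiodic v -> a <= b.
Proof.
move=> [L hL] hu bu pu hv bv pv.
rewrite leNgt; apply/negP => hba.
have d0 : 0 < a - b by rewrite subr_gt0.
pose cc (k : nat) : R := 2 ^+ k.
have cc0 : forall k, 0 < cc k by move=> k; rewrite exprn_gt0.
have cc1 : forall k, 1 <= cc k by move=> k; rewrite exprn_ege1 // ler1n.
pose Phi k (p : 'rV[R]_N * 'rV[R]_N) :=
  u p.1 - v p.2 - cc k * dotp (p.1 - p.2) (p.1 - p.2).
have hex : forall k : nat, exists p : 'rV[R]_N * 'rV[R]_N, forall x y, Phi k (x, y) <= Phi k p.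
  move=> k; have [x0 [y0 h]] := exists_max u v (cc k) (cc0 k) hu.1 hv.1 bu bv pu pv.
  by exists (x0, y0) => x y; exact: h.
have [g hg] := choice hex.
pose m k := Phi k (g k).
have [Mu hMu] := bu; have [Mv hMv] := bv.
have mub : forall k, m k <= Mu + Mv.
  move=> k; rewrite /m /Phi.
  have := hMu (g k).1; have := hMv (g k).2; rewrite !ler_norml => /andP[h1 h2] /andP[h3 h4].
  have := dotp_ge0 ((g k).1 - (g k).2); have := cc0 k; nra.
have mlb : forall k, - (Mu + Mv) <= m k.
  move=> k; apply: le_trans (hg k 0 0); rewrite /Phi /= subrr.
  have -> : dotp (0 : 'rV[R]_N) 0 = 0 by rewrite /dotp big1 // => i _; rewrite mxE mul0r.
  have := hMu 0; have := hMv 0; rewrite !ler_norml => /andP[h1 h2] /andP[h3 h4]; lra.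
have dec : forall k, cc k * dotp ((g k.+1).1 - (g k.+1).2) ((g k.+1).1 - (g k.+1).2)
                     <= m k - m k.+1.
  move=> k; have := hg k (g k.+1).1 (g k.+1).2.
  rewrite /m /Phi /= /cc exprS -mulrA; lra.
have small : forall e, 0 < e -> exists k, m k - m k.+1 <= e.
  move=> e e0; apply: contrapT => H.
  have H' : forall k, e < m k - m k.+1.
    by move=> k; rewrite ltNge; apply/negP => hk; apply: H; exists k.
  have ind : forall n : nat, n%:R * e <= m 0%N - m n.
    elim=> [|n IH]; first by rewrite mul0r subrr.
    have := H' n; rewrite -natr1 mulrDl mul1r; lra.
  pose n := (Num.truncn (2 * (Mu + Mv) / e)).+1.
  have hn : 2 * (Mu + Mv) / e < n%:R by exact: truncnS_gt.
  have hn' : 2 * (Mu + Mv) < n%:R * e by rewrite -ltr_pdivrMr.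
  have := ind n; have := mub 0%N; have := mlb n; lra.
set δ := a - b.
pose PP := dotp P P.
have PP0 : 0 <= PP by exact: dotp_ge0.
pose lam := δ / (2 * (PP + 1)).
have lam0 : 0 < lam by rewrite /lam divr_gt0 // mulr_gt0 // ltr_wpDl.
pose A := 2 * (1 + L ^+ 2) + L ^+ 2 / lam.
have A0 : 0 < A.
  rewrite /A ltr_wpDr ?mulr_gt0 ?ltr_wpDr ?sqr_ge0 //.
  by rewrite divr_ge0 ?sqr_ge0 // ltW.
pose e := δ / (4 * A).
have e0 : 0 < e by rewrite /e divr_gt0 // mulr_gt0.
have [k hk] := small e e0.
pose x := (g k.+1).1; pose y := (g k.+1).2; pose c := cc k.+1.
have hmax : forall x' y', u x' - v y' - c * dotp (x' - y') (x' - y')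
                 <= u x - v y - c * dotp (x - y) (x - y).
  by move=> x' y'; have := hg k.+1 x' y'.
have hst := step V P a b c u v x y hu hv hmax.
set d := x - y in hst hmax; set w := V y - V x in hst.
pose dd := dotp d d; pose ww := dotp w w.
have dd0 : 0 <= dd by exact: dotp_ge0.
have cdd : c * dd <= 2 * e.
  have := dec k; rewrite -/x -/y -/d -/dd => h.
  have : cc k * dd <= e by lra.
  by rewrite /c /cc exprS -mulrA; lra.
have c1 : 1 <= c by exact: cc1.
have ddle : dd <= 2 * e.
  apply: le_trans cdd; rewrite -[leLHS]mul1r; exact: ler_wpM2r.
have hww : ww <= L ^+ 2 * dd.
  have := lip_sq V L y x (hL y x); rewrite -/w -(dotpNN (y - x)) opprB.
  by rewrite -/d.
have hdw : 2 * dotp d w <= dd + ww by exact: dotp_2le.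
have hPw : 2 * (lam * dotp P w) <= lam * (lam * PP) + ww.
  have := dotp_2le (lam *: P) w.
  by rewrite !dotpZl (dotpC P (lam *: P)) dotpZl dotpC.
rewrite dotpDl dotpZl in hst.
have t1 : (2 * c) * dotp d w <= (1 + L ^+ 2) * (2 * e).
  have : c * (2 * dotp d w) <= c * (dd + ww) by apply: ler_wpM2l => //; lra.
  have : c * ww <= L ^+ 2 * (c * dd).
    rewrite mulrCA; apply: ler_wpM2l => //; lra.
  have : L ^+ 2 * (c * dd) <= L ^+ 2 * (2 * e) by apply: ler_wpM2l; rewrite ?sqr_ge0.
  rewrite -mulrA; lra.
have t2 : dotp P w <= lam * PP / 2 + L ^+ 2 * e / lam.
  have h : lam * (2 * dotp P w) <= lam * (lam * PP + 2 * (L ^+ 2 * e) / lam).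
    have : ww <= L ^+ 2 * (2 * e).
      apply: le_trans hww _; apply: ler_wpM2l; rewrite ?sqr_ge0 //.
    have -> : lam * (lam * PP + 2 * (L ^+ 2 * e) / lam) = lam * (lam * PP) + 2 * (L ^+ 2 * e).
      by field; rewrite gt_eqF.
    rewrite mulrCA; lra.
  rewrite ler_pM2l // in h.
  have -> : lam * PP / 2 + L ^+ 2 * e / lam = (lam * PP + 2 * (L ^+ 2 * e) / lam) / 2.
    by field; rewrite gt_eqF.
  by rewrite ler_pdivlMr // mulrC.
have t3 : (1 + L ^+ 2) * (2 * e) + L ^+ 2 * e / lam = A * e.
  by rewrite /A; field; rewrite gt_eqF.
have t4 : A * e = δ / 4.
  by rewrite /e; field; rewrite gt_eqF.
have t5 : lam * PP / 2 <= δ / 4.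
  rewrite /lam.
  have -> : δ / (2 * (PP + 1)) * PP / 2 = δ / 4 * (PP / (PP + 1)).
    by field; rewrite gt_eqF // ltr_wpDl.
  rewrite -[leRHS]mulr1; apply: ler_wpM2l; first by rewrite divr_ge0 // ltW.
  by rewrite ler_pdivrMr ?ltr_wpDl // mul1r lerDl.
have hδ : δ = a - b by []. lra.
Qed.

Theorem lemma6p10 (R : realType) (N : nat) (V : 'rV[R]_N -> 'rV[R]_N)
  (hVper : Zperiodic V) (hVlip : lipschitz_vf V)
  (P : 'rV[R]_N) (a : R) :
  (exists u : 'rV[R]_N -> R, visc_sub V P a u /\ bdd_fun u /\ Zperiodic u) ->
  (exists v : 'rV[R]_N -> R, visc_super V P a v /\ bdd_fun v /\ Zperiodic v) ->
  Hbar V P = a%:E.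
Proof.
move=> [u [hu [bu pu]]] [v [hv [bv pv]]].
rewrite /Hbar; apply/eqP; rewrite eq_le; apply/andP; split.
  apply: ereal_inf_lbound; exists a => //; exists u; split => //.
apply/ereal_infP => _ [b [w [hw [bw pw]]] <-].
rewrite lee_fin; exact: (comparison V P a b w v hVlip hw bw pw hv bv pv).
Qed.
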